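(* Let $m\ge1$, let $\mathcal{X},\mathcal{A}_1,\dots,\mathcal{A}_m$ be finite sets with $|\mathcal{X}|=d\ge2$, and let $P$ be a probability distribution on $\mathcal{X}\times\mathcal{A}_1\times\cdots\times\mathcal{A}_m$. Let $Q$ be an $m$-partite no-signalling correlation with outputs in $\mathcal{X}^m$ and inputs in $\mathcal{A}_1\times\cdots\times\mathcal{A}_m$ such that $Q(x,\dots,x|a_1,\dots,a_m)\le 1/d$ for all $x\in\mathcal{X}$ and all $a_i\in\mathcal{A}_i$. Then $$\sum_{x,a_1,\dots,a_m}P(x,a_1,\dots,a_m)Q(x,\dots,x|a_1,\dots,a_m)\le\omega_{\mathrm{c}},$$ where $\omega_{\mathrm{c}}=\max_{f_1,\dots,f_m}\sum_{x,a_1,\dots,a_m}P(x,a_1,\dots,a_m)\,\delta[f_1(a_1)=\cdots=f_m(a_m)=x]$ over functions $f_i\colon\mathcal{A}_i\to\mathcal{X}$.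
   Context: $\delta$ is the indicator function. An $m$-partite no-signalling correlation is a conditional distribution $Q(x_1,\dots,x_m|a_1,\dots,a_m)$ on $\mathcal{X}^m$ given $(a_1,\dots,a_m)$ such that for every index set $I\subset\{1,\dots,m\}$ with complement $J$, $\sum_{x_J}Q(x_I,x_J|a_I,a_J)$ does not depend on $a_J$ (for all fixed $x_I,a_I$). *)

(* Defs.v *)
From HB Require Import structures.
From mathcomp Require Import all_boot all_order all_algebra.
Set Implicit Arguments. Unset Strict Implicit. Unset Printing Implicit Defensive.
Import Order.TTheory GRing.Theory Num.Theory.
Local Open Scope ring_scope.

Definition inputs (m : nat) (A : 'I_m -> finType) := {dffun forall i : 'I_m, A i}.
Definition outputs (m : nat) (X : finType) := {ffun 'I_m -> X}.

Definition is_cond_distr (R : realFieldType) (m : nat) (X : finType)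
  (A : 'I_m -> finType) (Q : inputs A -> outputs m X -> R) : Prop :=
  (forall a x, 0 <= Q a x) /\ (forall a, \sum_(x : outputs m X) Q a x = 1).

Definition no_signalling (R : realFieldType) (m : nat) (X : finType)
  (A : 'I_m -> finType) (Q : inputs A -> outputs m X -> R) : Prop :=
  forall (I : {set 'I_m}) (a a' : inputs A) (xI : outputs m X),
    (forall i, i \in I -> a i = a' i) ->
    \sum_(x : outputs m X | [forall i in I, x i == xI i]) Q a x =
    \sum_(x : outputs m X | [forall i in I, x i == xI i]) Q a' x.

Definition is_distr (R : realFieldType) (T : finType) (P : T -> R) : Prop :=
  (forall t, 0 <= P t) /\ \sum_t P t = 1.

Definition classical_value (R : realFieldType) (m : nat) (X : finType)
  (A : 'I_m -> finType) (P : X * inputs A -> R)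
  (f : {dffun forall i : 'I_m, {ffun A i -> X}}) : R :=
  \sum_(x : X) \sum_(a : inputs A)
     P (x, a) * ([forall i, f i (a i) == x] : bool)%:R.

(* omega_c = max over classical strategies (all values are >= 0 for a
   probability distribution P, so folding Num.max from 0 gives the max). *)
Definition omega_c (R : realFieldType) (m : nat) (X : finType)
  (A : 'I_m -> finType) (P : X * inputs A -> R) : R :=
  \big[Num.max/0]_(f : {dffun forall i : 'I_m, {ffun A i -> X}})
     classical_value P f.

(* Main.v *)
Require Import Defs.
From HB Require Import structures.
From mathcomp Require Import all_boot all_order all_algebra.
Import Order.TTheory GRing.Theory Num.Theory.
Local Open Scope ring_scope.

Lemma le_bigmax0 (R : realFieldType) (I : finType) (F : I -> R) i :
  F i <= \big[Num.max/0]_j F j.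
Proof.
have : i \in index_enum I by rewrite mem_index_enum.
elim: (index_enum I) => // j s IH.
rewrite in_cons big_cons le_max => /orP [/eqP ->|/IH ->]; last by rewrite orbT.
by rewrite lexx.
Qed.

Theorem mainTheorem9 (R : realFieldType) (m : nat) (X : finType)
  (A : 'I_m -> finType)
  (P : X * inputs A -> R) (Q : inputs A -> outputs m X -> R) :
  (0 < m)%N ->
  (2 <= #|X|)%N ->
  is_distr P ->
  is_cond_distr Q ->
  no_signalling Q ->
  (forall (x : X) (a : inputs A), Q a [ffun _ => x] <= 1 / (#|X|%:R)) ->
  \sum_(x : X) \sum_(a : inputs A) P (x, a) * Q a [ffun _ => x]
    <= omega_c P.
Proof.
move=> hm hX [P0 P1] _ _ hQ.
have dpos : 0 < (#|X|%:R : R) by rewrite ltr0n; apply: leq_trans hX.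
have pv : forall x : X, \sum_(a : inputs A) P (x, a) <= omega_c P.
  move=> x.
  pose f : {dffun forall i : 'I_m, {ffun A i -> X}} := [ffun i => [ffun _ => x]].
  apply: le_trans (le_bigmax0 _ _ (fun g => classical_value P g) f).
  rewrite /classical_value [X in _ <= X](bigD1 x) //= [X in _ <= _ + X]big1 ?addr0.
    apply: ler_sum => a _.
    have -> : [forall i, f i (a i) == x] by apply/forallP => i; rewrite !ffunE.
    by rewrite mulr1.
  move=> y yx; apply: big1 => a _.
  case: (boolP [forall i, f i (a i) == y]) => [/forallP H|]; last by rewrite mulr0.
  exfalso.
  by move: (H (Ordinal hm)); rewrite !ffunE eq_sym (negbTE yx).
have h1 : \sum_(x : X) \sum_(a : inputs A) P (x, a) * Q a [ffun _ => x]
    <= \sum_(x : X) \sum_(a : inputs A) P (x, a) * (1 / #|X|%:R).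
  apply: ler_sum => x _; apply: ler_sum => a _.
  by apply: ler_wpM2l => //; apply: hQ.
apply: le_trans h1 _.
rewrite (eq_bigr (fun x => (\sum_(a : inputs A) P (x,a)) * (1 / #|X|%:R))); last by move=> x _; rewrite big_distrl.
rewrite -big_distrl /= pair_big /=.
have -> : \sum_(p : X * inputs A) P (p.1, p.2) = 1.
  by rewrite -P1; apply: eq_bigr => -[].
rewrite mul1r ler_pdivrMr // -sum1_card natr_sum mulr_sumr.
have P1' : \sum_(x : X) \sum_(a : inputs A) P (x, a) = 1.
  by rewrite pair_big -P1; apply: eq_bigr => -[].
rewrite -{1}P1'; apply: ler_sum => x _; apply: (le_trans (pv x)); rewrite ?mulr1n ?mulr1 ?natr1 //.
Qed.
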